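(* Let $M\subseteq\mathbb R^d$ be open, $\alpha\in(0,1]$, and let $\Phi:M\to\mathbb R^d$ be a conformal $C^{1+\alpha}$ diffeomorphism onto its image. Let $\varnothing\ne F\subseteq M$ be compact. Then there is $S>0$ such that $\Phi|_F:F\to\mathbb R^d$ is $\alpha$-almost similar with parameter $S$ (with respect to the Euclidean metrics on $F$ and $\mathbb R^d$).
   Context: Conformal $C^{1+\alpha}$ diffeomorphism: $\Phi$ and $\Phi^{-1}$ are $C^1$ with $\alpha$-Hölder continuous derivatives, and for each $x\in M$ the Jacobian matrix $D\Phi(x)$ is a nonzero scalar times a rotation matrix. A bi-Lipschitz map $\Psi:X\to Y$ between metric spaces is $\alpha$-almost similar with parameter $S\ge0$ if there is $A>0$ such that for every non-empty compact $K\subseteq X$ there is $C_K>0$ with $C_K(1+A\operatorname{diam}^\alpha K)^{-1}\le\frac{d_Y(\Psi(x),\Psi(y))}{d_X(x,y)}\le C_K(1+A\operatorname{diam}^\alpha K)$ for all $x\ne y\in K_{S\operatorname{diam}K}$, where $K_r=\{x\in X:\operatorname{dist}(x,K)\le r\}$ (for $X=F$ this is $F\cap\{x:\operatorname{dist}(x,K)\le r\}$). *)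

(* Defs.v *)
From mathcomp Require Import all_boot all_fingroup.
From Stdlib Require Import Reals.
Set Implicit Arguments. Unset Strict Implicit. Unset Printing Implicit Defensive.
Open Scope R_scope.

Definition vec (d : nat) := 'I_d -> R.
Definition mat (d : nat) := 'I_d -> 'I_d -> R.

Definition sumR (d : nat) (f : 'I_d -> R) : R := \big[Rplus/R0]_(i < d) f i.

Definition vsub d (x y : vec d) : vec d := fun i => x i - y i.
Definition mapply d (A : mat d) (x : vec d) : vec d := fun i => sumR (fun j => A i j * x j).

Definition vnorm d (x : vec d) : R := sqrt (sumR (fun i => x i ^ 2)).
Definition edist d (x y : vec d) : R := vnorm (vsub x y).
Definition mnorm d (A : mat d) : R := sqrt (sumR (fun i => sumR (fun j => A i j ^ 2))).
Definition msub d (A B : mat d) : mat d := fun i j => A i j - B i j.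

(* real power t^a for t >= 0, a > 0, with 0^a = 0 *)
Definition rpow (t a : R) : R := if Rle_dec t 0 then 0 else Rpower t a.

Definition sgnR d (s : {perm 'I_d}) : R := if odd_perm s then -1 else 1.
Definition detR d (A : mat d) : R :=
  \big[Rplus/R0]_(s : {perm 'I_d}) (sgnR s * \big[Rmult/R1]_(i < d) A i (s i)).

Definition rotation d (Q : mat d) : Prop :=
  (forall i j : 'I_d, sumR (fun k => Q k i * Q k j) = if i == j then 1 else 0)
  /\ detR Q = 1.

Definition conformal_mat d (A : mat d) : Prop :=
  exists (lam : R) (Q : mat d), lam <> 0 /\ rotation Q /\
    forall i j, A i j = lam * Q i j.

Definition is_open d (U : vec d -> Prop) : Prop :=
  forall x, U x -> exists r, 0 < r /\ forall y, edist y x < r -> U y.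

Definition seq_compact d (K : vec d -> Prop) : Prop :=
  forall u : nat -> vec d, (forall n, K (u n)) ->
    exists (phi : nat -> nat) (l : vec d),
      (forall n, is_true (leq (phi n).+1 (phi n.+1))) /\ K l /\
      forall eps, 0 < eps -> exists N, forall n, is_true (leq N n) -> edist (u (phi n)) l < eps.

Definition has_deriv d (U : vec d -> Prop) (f : vec d -> vec d) (x : vec d) (A : mat d) : Prop :=
  forall eps, 0 < eps -> exists delta, 0 < delta /\
    forall y, U y -> edist y x < delta ->
      vnorm (vsub (vsub (f y) (f x)) (mapply A (vsub y x))) <= eps * edist y x.

Definition C1alpha d (U : vec d -> Prop) (alpha : R) (f : vec d -> vec d) (Df : vec d -> mat d) : Prop :=
  (forall x, U x -> has_deriv U f x (Df x)) /\
  (forall x, U x -> forall eps, 0 < eps -> exists delta, 0 < delta /\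
      forall y, U y -> edist y x < delta -> mnorm (msub (Df y) (Df x)) < eps) /\
  exists C, 0 <= C /\ forall x y, U x -> U y ->
      mnorm (msub (Df x) (Df y)) <= C * rpow (edist x y) alpha.

Definition image d (U : vec d -> Prop) (f : vec d -> vec d) : vec d -> Prop :=
  fun y => exists x, U x /\ f x = y.

Definition conformal_C1a_diffeo d (M : vec d -> Prop) (alpha : R) (Phi : vec d -> vec d) : Prop :=
  exists (DPhi : vec d -> mat d) (Psi : vec d -> vec d) (DPsi : vec d -> mat d),
    C1alpha M alpha Phi DPhi /\
    (forall x, M x -> conformal_mat (DPhi x)) /\
    is_open (image M Phi) /\
    (forall x, M x -> Psi (Phi x) = x) /\
    (forall y, image M Phi y -> M (Psi y) /\ Phi (Psi y) = y) /\
    C1alpha (image M Phi) alpha Psi DPsi.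

Definition is_diam d (K : vec d -> Prop) (D : R) : Prop :=
  is_lub (fun r => exists x y, K x /\ K y /\ r = edist x y) D.

(* x belongs to X_r = {x in X : dist(x, K) <= r}, with dist(x,K) = inf_{k in K} |x-k| *)
Definition in_nbhd d (X K : vec d -> Prop) (r : R) (x : vec d) : Prop :=
  X x /\ forall eps, 0 < eps -> exists k, K k /\ edist x k < r + eps.

Definition bilipschitz_on d (X : vec d -> Prop) (f : vec d -> vec d) : Prop :=
  exists L, 0 < L /\ forall x y, X x -> X y ->
    edist x y / L <= edist (f x) (f y) <= L * edist x y.

Definition almost_similar_on d (X : vec d -> Prop) (alpha S : R) (f : vec d -> vec d) : Prop :=
  bilipschitz_on X f /\
  exists A, 0 < A /\
    forall K : vec d -> Prop, (exists k, K k) -> seq_compact K -> (forall k, K k -> X k) ->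
    forall D, is_diam K D ->
    exists CK, 0 < CK /\
      forall x y, in_nbhd X K (S * D) x -> in_nbhd X K (S * D) y -> x <> y ->
        CK / (1 + A * rpow D alpha) <= edist (f x) (f y) / edist x y
        <= CK * (1 + A * rpow D alpha).

(* Main.v *)
Require Import Defs.
From HB Require Import structures.
From mathcomp Require Import all_boot all_fingroup.
From Stdlib Require Import Reals Lra.
Set Implicit Arguments. Unset Strict Implicit.
Open Scope R_scope.

Lemma RplusA' : associative Rplus. Proof. by move=>*; rewrite Rplus_assoc. Qed.
HB.instance Definition _ := Monoid.isComLaw.Build R R0 Rplus RplusA' Rplus_comm Rplus_0_l.

Section S.
Variable d : nat.
Implicit Types f g : 'I_d -> R.

Lemma sumR_ext f g : (forall i, f i = g i) -> sumR f = sumR g.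
Proof. by move=> H; rewrite /sumR; apply: eq_bigr => i _. Qed.
Lemma sumR_add f g : sumR (fun i => f i + g i) = sumR f + sumR g.
Proof. by rewrite /sumR big_split. Qed.
Lemma sumR_scal c f : sumR (fun i => c * f i) = c * sumR f.
Proof.
rewrite /sumR; elim/big_rec2: _ => [|i y1 y2 _ ->]; lra.
Qed.
Lemma sumR_sub f g : sumR (fun i => f i - g i) = sumR f - sumR g.
Proof.
rewrite /sumR; elim/big_rec3: _ => [|i y1 y2 y3 _ ->]; lra.
Qed.
Lemma sumR_le f g : (forall i, f i <= g i) -> sumR f <= sumR g.
Proof.
move=> H; rewrite /sumR; elim/big_rec2: _ => [|i y1 y2 _ Hy]; first lra.
have := H i; lra.
Qed.
Lemma sumR_ge0 f : (forall i, 0 <= f i) -> 0 <= sumR f.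
Proof.
move=> H; have -> : 0 = sumR (fun _ : 'I_d => 0).
  rewrite /sumR; elim/big_rec: _ => [|i y _ <-]; lra.
by apply: sumR_le.
Qed.
End S.

Lemma sumR_exch d (f : 'I_d -> 'I_d -> R) :
  sumR (fun i => sumR (fun j => f i j)) = sumR (fun j => sumR (fun i => f i j)).
Proof. by rewrite /sumR exchange_big. Qed.

Definition dot d (u v : vec d) : R := sumR (fun i => u i * v i).

Section V.
Variable d : nat.
Implicit Types u v w : vec d.

Lemma vnorm_dot u : vnorm u = sqrt (dot u u).
Proof. by rewrite /vnorm /dot; f_equal; apply: sumR_ext => i; ring. Qed.
Lemma dot_ge0 u : 0 <= dot u u.
Proof. by apply: sumR_ge0 => i; nra. Qed.
Lemma vnorm_ge0 u : 0 <= vnorm u.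
Proof. by rewrite vnorm_dot; apply: sqrt_pos. Qed.
Lemma vnorm_sq u : vnorm u * vnorm u = dot u u.
Proof. by rewrite vnorm_dot sqrt_sqrt //; apply: dot_ge0. Qed.
Lemma dot_ext u u' v v' : (forall i, u i = u' i) -> (forall i, v i = v' i) -> dot u v = dot u' v'.
Proof. by move=> H1 H2; apply: sumR_ext => i; rewrite H1 H2. Qed.
Lemma vnorm_ext u v : (forall i, u i = v i) -> vnorm u = vnorm v.
Proof. by move=> H; rewrite !vnorm_dot (dot_ext H H). Qed.
Lemma dot_sym u v : dot u v = dot v u.
Proof. by apply: sumR_ext => i; ring. Qed.

Lemma CS u v : dot u v * dot u v <= dot u u * dot v v.
Proof.
set a := dot v v; set b := dot u v; set c := dot u u.
have Q : forall t, 0 <= c + 2 * t * b + t * t * a.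
  move=> t.
  have -> : c + 2 * t * b + t * t * a = dot (fun i => u i + t * v i) (fun i => u i + t * v i).
    rewrite /a /b /c /dot -!sumR_scal -!sumR_add; apply: sumR_ext => i; ring.
  exact: dot_ge0.
have ha : 0 <= a by apply: dot_ge0.
have hc : 0 <= c by apply: dot_ge0.
case: (Req_dec a 0) => [a0|an0].
- case: (Req_dec b 0) => [->|bn0]; first nra.
  have := Q (-(c+1)/(2*b)). rewrite a0.
  have -> : c + 2 * (- (c + 1) / (2 * b)) * b = -1 by field.
  lra.
- have := Q (-b/a).
  have -> : c + 2 * (- b / a) * b + - b / a * (- b / a) * a = c - b*b/a by field.
  move=> h.
  have : b * b / a <= c by lra.
  move=> h2. have ha' : 0 < a by lra.
  have : b * b <= c * a.
    have := Rmult_le_compat_r a _ _ (Rlt_le _ _ ha') h2.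
    by have -> : b * b / a * a = b * b by field.
  lra.
Qed.

Lemma dot_abs u v : Rabs (dot u v) <= vnorm u * vnorm v.
Proof.
have h1 := vnorm_ge0 u; have h2 := vnorm_ge0 v.
have := CS u v; rewrite -!vnorm_sq => h.
rewrite -[X in _ <= X]Rabs_pos_eq; last nra.
apply: Rsqr_le_abs_0; rewrite /Rsqr; nra.
Qed.
Lemma dot_le u v : dot u v <= vnorm u * vnorm v.
Proof. have := dot_abs u v; have := Rle_abs (dot u v); lra. Qed.

Lemma sqrt_le_of a b : 0 <= b -> a <= b * b -> sqrt a <= b.
Proof.
move=> hb h; rewrite -(sqrt_square b) //; apply: sqrt_le_1_alt; lra.
Qed.

Lemma vnorm_tri u v : vnorm (fun i => u i + v i) <= vnorm u + vnorm v.
Proof.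
rewrite [vnorm (fun i => _)]vnorm_dot.
have h1 := vnorm_ge0 u; have h2 := vnorm_ge0 v.
apply: sqrt_le_of; first lra.
have -> : dot (fun i => u i + v i) (fun i => u i + v i) = dot u u + 2 * dot u v + dot v v.
  by rewrite /dot -sumR_scal -!sumR_add; apply: sumR_ext => i; ring.
have := dot_le u v; rewrite -!vnorm_sq; nra.
Qed.

Lemma vnorm_scal c u : vnorm (fun i => c * u i) = Rabs c * vnorm u.
Proof.
rewrite !vnorm_dot.
have -> : dot (fun i => c * u i) (fun i => c * u i) = (Rabs c * Rabs c) * dot u u.
  rewrite -Rabs_mult Rabs_pos_eq; last nra.
  by rewrite /dot -sumR_scal; apply: sumR_ext => i; ring.
rewrite sqrt_mult; [|nra|apply: dot_ge0].
by rewrite sqrt_square //; apply: Rabs_pos.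
Qed.

Lemma vnorm_opp u : vnorm (fun i => - u i) = vnorm u.
Proof.
rewrite -[RHS]Rmult_1_l -[1]Rabs_R1 -[in RHS]Rabs_Ropp -vnorm_scal.
by apply: vnorm_ext => i; ring.
Qed.

Lemma edist_sym u v : edist u v = edist v u.
Proof. by rewrite /edist -vnorm_opp; apply: vnorm_ext => i; rewrite /vsub; ring. Qed.
Lemma edist_tri u v w : edist u w <= edist u v + edist v w.
Proof.
rewrite /edist -(vnorm_ext (u:=fun i => vsub u v i + vsub v w i)); first exact: vnorm_tri.
by move=> i; rewrite /vsub; ring.
Qed.
Lemma edist_ge0 u v : 0 <= edist u v.
Proof. exact: vnorm_ge0. Qed.
Lemma edist_refl u : edist u u = 0.
Proof.
rewrite /edist vnorm_dot -sqrt_0; f_equal.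
rewrite /dot /sumR; elim/big_rec: _ => [|i y _ ->] //; rewrite /vsub; ring.
Qed.

End V.

Lemma mapply_dot d (A : mat d) v i : mapply A v i = dot (A i) v.
Proof. by []. Qed.
Lemma mnorm_dot d (A : mat d) : mnorm A = sqrt (sumR (fun i => dot (A i) (A i))).
Proof. by rewrite /mnorm; f_equal; apply: sumR_ext => i; apply: sumR_ext => j; ring. Qed.
Lemma mnorm_ge0 d (A : mat d) : 0 <= mnorm A.
Proof. exact: sqrt_pos. Qed.

Lemma vnorm_mapply d (A : mat d) v : vnorm (mapply A v) <= mnorm A * vnorm v.
Proof.
rewrite vnorm_dot.
apply: sqrt_le_of; first by apply: Rmult_le_pos; [apply: mnorm_ge0|apply: vnorm_ge0].
have -> : mnorm A * vnorm v * (mnorm A * vnorm v) = (mnorm A * mnorm A) * (vnorm v * vnorm v) by ring.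
rewrite mnorm_dot sqrt_sqrt; last by apply: sumR_ge0 => i; apply: dot_ge0.
rewrite vnorm_sq.
have -> : sumR (fun i => dot (A i) (A i)) * dot v v = sumR (fun i => dot (A i) (A i) * dot v v).
  by rewrite Rmult_comm -sumR_scal; apply: sumR_ext => i; ring.
apply: sumR_le => i; rewrite !mapply_dot.
have := CS (A i) v; lra.
Qed.

Lemma sumR_mul d (a b : 'I_d -> R) :
  sumR a * sumR b = sumR (fun j => sumR (fun l => a j * b l)).
Proof.
rewrite Rmult_comm -sumR_scal; apply: sumR_ext => j.
by rewrite Rmult_comm -sumR_scal; apply: sumR_ext => l; ring.
Qed.

Lemma sumR_delta d (j : 'I_d) (c : 'I_d -> R) :
  sumR (fun l => c l * (if j == l then 1 else 0)) = c j.
Proof.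
rewrite /sumR (bigD1 j) //= eqxx big1; first ring.
by move=> l /negbTE; rewrite eq_sym => ->; ring.
Qed.

Lemma vnorm_rot d (Q : mat d) v : rotation Q -> vnorm (mapply Q v) = vnorm v.
Proof.
case=> HQ _; rewrite !vnorm_dot; f_equal.
rewrite /dot.
have -> : sumR (fun i => mapply Q v i * mapply Q v i) =
  sumR (fun i => sumR (fun j => sumR (fun l => Q i j * v j * (Q i l * v l)))).
  by apply: sumR_ext => i; rewrite /mapply sumR_mul.
rewrite sumR_exch.
have E : forall j, sumR (fun i => sumR (fun l => Q i j * v j * (Q i l * v l))) =
   sumR (fun l => v j * v l * (if j == l then 1 else 0)).
  move=> j; rewrite sumR_exch; apply: sumR_ext => l; rewrite -HQ -sumR_scal.
  by apply: sumR_ext => i; ring.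
by apply: sumR_ext => j; rewrite E sumR_delta.
Qed.

Lemma vnorm_conf d (A : mat d) : conformal_mat A ->
  exists mu, 0 <= mu /\ forall v, vnorm (mapply A v) = mu * vnorm v.
Proof.
case=> lam [Q [_ [HQ HA]]]; exists (Rabs lam); split; first exact: Rabs_pos.
move=> v; rewrite -(vnorm_rot v HQ) -vnorm_scal; apply: vnorm_ext => i.
by rewrite /mapply -sumR_scal; apply: sumR_ext => j; rewrite HA; ring.
Qed.

From Stdlib Require Import FunctionalExtensionality.

Definition seg d (x y : vec d) (t : R) : vec d := fun i => x i + t * (y i - x i).

Lemma mapply_scal d (A : mat d) u v c i : (forall j, u j = c * v j) -> mapply A u i = c * mapply A v i.
Proof. by move=> H; rewrite /mapply -sumR_scal; apply: sumR_ext => j; rewrite H; ring. Qed.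
Lemma mapply_msub d (A B : mat d) v i : mapply (msub A B) v i = mapply A v i - mapply B v i.
Proof. by rewrite /mapply -sumR_sub; apply: sumR_ext => j; rewrite /msub; ring. Qed.

Lemma seg_dist d (x y : vec d) t s : edist (seg x y s) (seg x y t) = Rabs (s - t) * edist y x.
Proof.
rewrite /edist -vnorm_scal; apply: vnorm_ext => i; rewrite /vsub /seg; ring.
Qed.

Lemma mvt_est d (U : vec d -> Prop) f Df x y (B : mat d) m :
  is_open U -> (forall z, U z -> has_deriv U f z (Df z)) ->
  (forall t, 0 <= t <= 1 -> U (seg x y t) /\ mnorm (msub (Df (seg x y t)) B) <= m) ->
  vnorm (vsub (vsub (f y) (f x)) (mapply B (vsub y x))) <= m * edist y x.
Proof.
move=> Uo Hd Hs.
set w := vsub (vsub (f y) (f x)) (mapply B (vsub y x)).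
set e := vsub y x.
pose h t := dot w (fun i => f (seg x y t) i - t * mapply B e i).
pose h' t := dot w (mapply (msub (Df (seg x y t)) B) e).
have hm0 : 0 <= m.
  have [_ +] := Hs 0 ltac:(lra); have := mnorm_ge0 (msub (Df (seg x y 0)) B); lra.
have hw := vnorm_ge0 w; have he := vnorm_ge0 e.
have Hder : forall t, 0 <= t <= 1 -> derivable_pt_lim h t (h' t).
  move=> t ht eps heps.
  have [Uz _] := Hs t ht.
  set z := seg x y t.
  set K := vnorm w * vnorm e + 1.
  have hK : 0 < K by rewrite /K; nra.
  have [d1 [hd1 Hd1]] := Hd z Uz (eps / (2 * K)) ltac:(apply: Rdiv_lt_0_compat; lra).
  have [r [hr Hr]] := Uo z Uz.
  have hpos : 0 < Rmin d1 r / (vnorm e + 1).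
    apply: Rdiv_lt_0_compat; last lra; apply: Rmin_glb_lt; lra.
  exists (mkposreal _ hpos) => s hs0 hs /=.
  have hs' : Rabs s * vnorm e < Rmin d1 r.
    have hs2 : Rabs s * (vnorm e + 1) < Rmin d1 r.
      simpl in hs. apply (Rmult_lt_compat_r (vnorm e + 1)) in hs; last lra.
      by move: hs; rewrite /Rdiv Rmult_assoc Rinv_l; lra.
    have := Rabs_pos s; nra.
  have hz' : edist (seg x y (t + s)) z < Rmin d1 r.
    by rewrite /z seg_dist; have -> : t + s - t = s by ring.
  have Uz' : U (seg x y (t + s)).
    apply: Hr; have := Rmin_r d1 r; lra.
  have Hg := Hd1 _ Uz' ltac:(have := Rmin_l d1 r; lra).
  set g := vsub (vsub (f (seg x y (t + s))) (f z)) (mapply (Df z) (vsub (seg x y (t + s)) z)) in Hg.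
  have Eq : h (t + s) - h t - s * h' t = dot w g.
    rewrite /h /h' /dot -sumR_scal -!sumR_sub; apply: sumR_ext => i.
    rewrite /g /vsub mapply_msub (mapply_scal (Df z) (c := s) (v := e)); last first.
      by move=> j; rewrite /z /seg /e /vsub; ring.
    rewrite -/z; ring.
  have -> : (h (t + s) - h t) / s - h' t = dot w g / s.
    rewrite -Eq; field; exact: hs0.
  rewrite /Rdiv Rabs_mult Rabs_inv.
  have hsa : 0 < Rabs s by apply: Rabs_pos_lt.
  apply: (Rmult_lt_reg_r (Rabs s)) => //.
  rewrite Rmult_assoc Rinv_l; last lra.
  have := dot_abs w g.
  move: Hg; rewrite -/z => Hg.
  have Hg' : vnorm g <= eps / (2 * K) * (Rabs s * vnorm e).
    by move: Hg; rewrite /z seg_dist; have -> : t + s - t = s by ring.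
  have : vnorm w * vnorm g <= vnorm w * (eps / (2 * K) * (Rabs s * vnorm e)).
    by apply: Rmult_le_compat_l.
  have -> : vnorm w * (eps / (2 * K) * (Rabs s * vnorm e)) =
            (vnorm w * vnorm e) / K * (eps / 2) * Rabs s by field; lra.
  have : (vnorm w * vnorm e) / K <= 1.
    have : 0 < 1/K by apply: Rdiv_lt_0_compat; lra.
    have -> : vnorm w * vnorm e / K = 1 - 1/K by rewrite /K; field; nra.
    lra.
  move=> h1 h2 h3.
  have : vnorm w * vnorm e / K * (eps / 2) * Rabs s <= 1 * (eps / 2) * Rabs s.
    apply: Rmult_le_compat_r; first lra. apply: Rmult_le_compat_r; lra.
  nra.
have [c [Hc hc]] := MVT_cor2 h h' 0 1 Rlt_0_1 Hder.
have h1 : seg x y 1 = y by apply: functional_extensionality => i; rewrite /seg; ring.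
have h0 : seg x y 0 = x by apply: functional_extensionality => i; rewrite /seg; ring.
have Eww : h 1 - h 0 = dot w w.
  rewrite /h h1 h0 /dot -sumR_sub; apply: sumR_ext => i; rewrite /w /e /vsub /=; change (fun i0 : 'I_d => y i0 - x i0) with (vsub y x); ring.
rewrite Eww -vnorm_sq in Hc.
have [_ Hmc] := Hs c ltac:(lra).
have Hh' : h' c <= vnorm w * (m * vnorm e).
  apply: Rle_trans (dot_le _ _) _; apply: Rmult_le_compat_l => //.
  apply: Rle_trans (vnorm_mapply _ _) _; apply: Rmult_le_compat_r => //.
have : vnorm w * vnorm w <= vnorm w * (m * vnorm e) by lra.
rewrite /edist -/e => H.
case: (Req_dec (vnorm w) 0) => [->|hn0]; first nra.
apply: (Rmult_le_reg_l (vnorm w)); lra.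
Qed.

From Stdlib Require Import ClassicalEpsilon Classical.

Lemma choice_seq (T : Type) (P : nat -> T -> Prop) :
  (forall n, exists x, P n x) -> exists u, forall n, P n (u n).
Proof.
move=> H; exists (fun n => proj1_sig (constructive_indefinite_description _ (H n))) => n.
exact: proj2_sig.
Qed.

Lemma phi_ge (phi : nat -> nat) : (forall n, leq (phi n).+1 (phi n.+1)) -> forall n, leq n (phi n).
Proof.
move=> H; elim=> [|n IH] //; apply: leq_trans (H n); by rewrite ltnS.
Qed.

Lemma small_inv eps : 0 < eps -> exists n, forall m, leq n m -> / (INR m + 1) < eps.
Proof.
move=> he; have [N [HN HN0]] := archimed_cor1 eps he.
exists N => m /leP hm.
have h1 : INR N <= INR m by apply: le_INR.
have h2 : 0 < INR N by apply: lt_0_INR.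
apply: Rle_lt_trans HN; apply: Rinv_le_contravar => //; lra.
Qed.

Lemma big_nat c : exists n, forall m, leq n m -> c < INR m.
Proof.
have hc := Rabs_pos c; have hc2 := Rle_abs c.
have hp : 0 < / (Rabs c + 1) by apply: Rinv_0_lt_compat; lra.
have [n Hn] := small_inv hp.
exists n => m hm; have := Hn m hm => h.
have hm0 := pos_INR m.
case: (Rle_lt_dec (INR m + 1) (Rabs c + 1)) => [hle|]; last lra.
have : / (Rabs c + 1) <= / (INR m + 1) by apply: Rinv_le_contravar => //; lra.
lra.
Qed.

Lemma sc_sub d (K : vec d -> Prop) u : seq_compact K -> (forall n, K (u n)) ->
  exists phi l, (forall n, leq n (phi n)) /\ K l /\
    forall eps, 0 < eps -> exists N, forall n, leq N n -> edist (u (phi n)) l < eps.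
Proof.
move=> HK Hu; have [phi [l [Hp [Hl Hc]]]] := HK u Hu.
by exists phi, l; split; [apply: phi_ge|split].
Qed.

Lemma margin d (F M : vec d -> Prop) : seq_compact F -> is_open M -> (forall x, F x -> M x) ->
  exists del, 0 < del /\ forall k z, F k -> edist z k < del -> M z.
Proof.
move=> HF HM HFM; apply: NNPP => Hn.
have Hs : forall n : nat, exists p : vec d * vec d,
    F p.1 /\ edist p.2 p.1 < / (INR n + 1) /\ ~ M p.2.
  move=> n; apply: NNPP => Hn2; apply: Hn.
  exists (/ (INR n + 1)); split; first by apply: Rinv_0_lt_compat; have := pos_INR n; lra.
  move=> k z Hk Hz; apply: NNPP => HMz; apply: Hn2; by exists (k, z).
have [u Hu] := choice_seq Hs.
have [phi [l [Hp [Hl Hc]]]] := sc_sub HF (u := fun n => (u n).1) (fun n => proj1 (Hu n)).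
have [r [hr Hr]] := HM l (HFM l Hl).
have [N1 HN1] := Hc (r/2) ltac:(lra).
have [N2 HN2] := small_inv (eps:=r/2) ltac:(lra).
set n := maxn N1 N2.
have [_ [h1 h2]] := Hu (phi n).
apply: h2; apply: Hr.
have := HN1 n (leq_maxl _ _).
have := HN2 (phi n) (leq_trans (leq_maxr N1 N2) (Hp n)).
have := edist_tri (u (phi n)).2 (u (phi n)).1 l.
lra.
Qed.

Lemma bounded d (K : vec d -> Prop) p : seq_compact K ->
  exists R, 0 <= R /\ forall x, K x -> edist x p <= R.
Proof.
move=> HK; apply: NNPP => Hn.
have Hs : forall n : nat, exists x, K x /\ INR n < edist x p.
  move=> n; apply: NNPP => Hn2; apply: Hn; exists (INR n); split; first exact: pos_INR.
  move=> x Kx; apply: Rnot_lt_le => h; apply: Hn2; by exists x.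
have [u Hu] := choice_seq Hs.
have [phi [l [Hp [Hl Hc]]]] := sc_sub HK (u := u) (fun n => proj1 (Hu n)).
have [N1 HN1] := Hc 1 Rlt_0_1.
have [N2 HN2] := big_nat (1 + edist l p).
set n := maxn N1 N2.
have h1 := HN1 n (leq_maxl _ _).
have h2 := HN2 (phi n) (leq_trans (leq_maxr N1 N2) (Hp n)).
have [_ h3] := Hu (phi n).
have := edist_tri (u (phi n)) l p.
lra.
Qed.

Definition contin_on d (K : vec d -> Prop) (f : vec d -> vec d) :=
  forall x, K x -> forall eps, 0 < eps -> exists del, 0 < del /\
    forall y, K y -> edist y x < del -> edist (f y) (f x) < eps.

Lemma image_compact d (K : vec d -> Prop) f : seq_compact K -> contin_on K f ->
  seq_compact (Defs.image K f).
Proof.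
move=> HK Hf u Hu.
have [v Hv] := choice_seq Hu.
have [phi [l [Hp [Hl Hc]]]] := HK v (fun n => proj1 (Hv n)).
exists phi, (f l); split => //; split; first by exists l.
move=> eps he; have [del [hd Hd]] := Hf l Hl eps he.
have [N HN] := Hc del hd.
exists N => n hn; have [h1 h2] := Hv (phi n); rewrite -h2.
by apply: Hd => //; apply: HN.
Qed.

Lemma deriv_contin d (U : vec d -> Prop) f Df :
  (forall z, U z -> has_deriv U f z (Df z)) -> contin_on U f.
Proof.
move=> Hd x Ux eps he.
have [d1 [hd1 Hd1]] := Hd x Ux 1 Rlt_0_1.
set mA := mnorm (Df x); have hmA : 0 <= mA by apply: mnorm_ge0.
exists (Rmin d1 (eps / (1 + mA))); split.
  apply: Rmin_glb_lt => //; apply: Rdiv_lt_0_compat; lra.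
move=> y Uy hy.
have hy1 : edist y x < d1 by have := Rmin_l d1 (eps / (1 + mA)); lra.
have hy2 : edist y x < eps / (1 + mA) by have := Rmin_r d1 (eps / (1 + mA)); lra.
have H1 := Hd1 y Uy hy1.
have H2 := vnorm_mapply (Df x) (vsub y x).
rewrite /edist (vnorm_ext (v := fun i => vsub (vsub (f y) (f x)) (mapply (Df x) (vsub y x)) i
    + mapply (Df x) (vsub y x) i)); last by move=> i; rewrite /vsub; ring.
apply: Rle_lt_trans (vnorm_tri _ _) _.
rewrite -/(edist y x) in H1 H2 |- *.
have he0 := edist_ge0 y x.
have : (1 + mA) * edist y x < eps.
  have -> : eps = (1 + mA) * (eps / (1 + mA)) by field; lra.
  apply: Rmult_lt_compat_l; lra.
rewrite -/mA in H2; nra.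
Qed.

Lemma rpow_ge0 t a : 0 <= rpow t a.
Proof. rewrite /rpow; destruct (Rle_dec t 0) => /=; [lra|exact: Rlt_le (exp_pos _)]. Qed.
Lemma rpow_pos t a : 0 < t -> 0 < rpow t a.
Proof. move=> ht; rewrite /rpow; destruct (Rle_dec t 0) => /=; [lra|exact: exp_pos]. Qed.
Lemma rpow_mono s t a : 0 < a -> s <= t -> rpow s a <= rpow t a.
Proof.
move=> ha hst; have := rpow_ge0 t a; rewrite /rpow.
destruct (Rle_dec s 0) as [hs|hs] => //=; destruct (Rle_dec t 0) as [ht|ht] => /=; first lra.
move=> _.
apply: Rle_Rpower_l; lra.
Qed.
Lemma rpow_2 D a : 0 < a <= 1 -> 0 <= D -> rpow (2 * D) a <= 2 * rpow D a.
Proof.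
move=> ha hD; rewrite /rpow; destruct (Rle_dec (2 * D) 0) as [h1|h1]; destruct (Rle_dec D 0) as [h2|h2] => /=.
- lra.
- apply Rnot_le_lt in h2; lra.
- apply Rnot_le_lt in h1; lra.
- rewrite -Rpower_mult_distr; try lra.
  have : Rpower 2 a <= Rpower 2 1 by apply: Rle_Rpower; lra.
  rewrite Rpower_1; last lra.
  have := exp_pos (a * ln D); rewrite /Rpower; nra.
Qed.

Lemma seg_x d (x y : vec d) t : 0 <= t -> edist (seg x y t) x = t * edist y x.
Proof.
move=> ht; rewrite /edist; transitivity (Rabs t * vnorm (vsub y x)); last by rewrite Rabs_pos_eq.
rewrite -vnorm_scal; by apply: vnorm_ext => i; rewrite /vsub /seg; ring.
Qed.

Lemma vsub_split d (u v : vec d) (A : mat d) (e : vec d) :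
  vnorm (vsub u v) <= vnorm (vsub (vsub u v) (mapply A e)) + vnorm (mapply A e).
Proof.
rewrite (vnorm_ext (u := vsub u v) (v := fun i => vsub (vsub u v) (mapply A e) i + mapply A e i)).
  exact: vnorm_tri.
by move=> i; rewrite /vsub; ring.
Qed.

Lemma lip d (U G : vec d -> Prop) f Df a C : is_open U -> 0 < a ->
  (forall z, U z -> has_deriv U f z (Df z)) -> 0 <= C ->
  (forall x y, U x -> U y -> mnorm (msub (Df x) (Df y)) <= C * rpow (edist x y) a) ->
  seq_compact G -> (forall x, G x -> U x) ->
  exists L, 0 < L /\ forall x y, G x -> G y -> edist (f x) (f y) <= L * edist x y.
Proof.
move=> HU ha Hd hC Hh HG HGU.
case: (classic (exists x0, G x0)) => [[x0 Gx0]|Hne]; last first.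
  exists 1; split; first lra; move=> x y Gx; exfalso; apply: Hne; by exists x.
have [del [hdel Hdel]] := margin HG HU HGU.
have [R0 [hR0 HR0]] := bounded x0 HG.
have Hc : contin_on G f.
  move=> x Gx eps he; have [dd [hdd Hdd]] := deriv_contin Hd (HGU x Gx) he.
  exists dd; split => // y Gy; apply: Hdd; exact: HGU.
have [R1 [hR1 HR1]] := bounded (f x0) (image_compact HG Hc).
set m' := C * rpow (R0 + del) a.
set mA := mnorm (Df x0).
have hm' : 0 <= m' by apply: Rmult_le_pos => //; apply: rpow_ge0.
have hmA : 0 <= mA by apply: mnorm_ge0.
have h2 : 0 <= 2 * R1 / del by apply: Rmult_le_pos; [lra|apply: Rlt_le; apply: Rinv_0_lt_compat; lra].
exists (m' + mA + 2 * R1 / del + 1); split; first lra.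
move=> x y Gx Gy.
have he := edist_ge0 x y.
case: (Rlt_le_dec (edist y x) del) => hxy.
- have Hm := @mvt_est d U f Df x y (Df x0) m' HU Hd.
  have : vnorm (vsub (vsub (f y) (f x)) (mapply (Df x0) (vsub y x))) <= m' * edist y x.
    apply: Hm => t ht.
    have hzx : edist (seg x y t) x <= edist y x.
      rewrite seg_x; last lra; have := edist_ge0 y x; nra.
    have Uz : U (seg x y t) by apply: (Hdel x) => //; lra.
    split => //.
    apply: Rle_trans (Hh _ _ Uz (HGU _ Gx0)) _.
    apply: Rmult_le_compat_l => //; apply: rpow_mono => //.
    have := edist_tri (seg x y t) x x0; have := HR0 x Gx; lra.
  have H2 := vnorm_mapply (Df x0) (vsub y x).
  have H3 := vsub_split (f y) (f x) (Df x0) (vsub y x).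
  move=> H1.
  rewrite edist_sym (edist_sym x y) /edist.
  rewrite /edist -/mA in H1 H2 hxy.
  have he' := vnorm_ge0 (vsub y x).
  have : 0 <= (2 * R1 / del + 1) * vnorm (vsub y x) by apply: Rmult_le_pos; lra.
  nra.
- have h1 := HR1 (f x) (ex_intro _ x (conj Gx erefl)).
  have h1' := HR1 (f y) (ex_intro _ y (conj Gy erefl)).
  have := edist_tri (f x) (f x0) (f y).
  rewrite (edist_sym (f x0) (f y)) => h3.
  have : 2 * R1 <= 2 * R1 / del * edist x y.
    rewrite edist_sym.
    have -> : 2 * R1 / del * edist y x = 2 * R1 * (edist y x / del) by field; lra.
    have : 1 <= edist y x / del.
      apply: (Rmult_le_reg_r del) => //; rewrite /Rdiv Rmult_assoc Rinv_l; lra.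
    nra.
  have : 0 <= (m' + mA + 1) * edist x y by apply: Rmult_le_pos; lra.
  nra.
Qed.

Lemma alg_small L C X eta mu r A : 1 <= L -> 0 <= C -> 0 <= X -> 0 <= eta <= 2 * C * X ->
  4 * L * C <= A -> 1 / L <= r -> mu - eta <= r <= mu + eta ->
  Rmax (1 / L) (mu - eta) <= r /\
  r <= Rmax (1 / L) (mu - eta) * (1 + A * X) * (1 + A * X).
Proof.
move=> hL hC hX he hA hr hm.
set a := Rmax (1 / L) (mu - eta).
have ha1 : 1 / L <= a by apply: Rmax_l.
have ha2 : mu - eta <= a by apply: Rmax_r.
have hL0 : 0 < 1 / L by apply: Rdiv_lt_0_compat; lra.
split; first by apply: Rmax_lub; lra.
have hAX : 4 * L * C * X <= A * X by apply: Rmult_le_compat_r.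
have h1 : 4 * C * X <= a * (A * X).
  have : 1 / L * (4 * L * C * X) <= a * (A * X).
    apply: Rmult_le_compat => //; try lra.
    have := Rmult_le_pos _ _ (Rmult_le_pos _ _ (Rmult_le_pos 4 L ltac:(lra) ltac:(lra)) hC) hX; lra.
  by have -> : 1 / L * (4 * L * C * X) = 4 * C * X by field; lra.
have hAX0 : 0 <= A * X by have := Rmult_le_pos _ _ (Rmult_le_pos 4 L ltac:(lra) ltac:(lra)) hC; nra.
have : a * (1 + A * X) <= a * (1 + A * X) * (1 + A * X).
  have : 0 <= a * (1 + A * X) by apply: Rmult_le_pos; lra.
  nra.
nra.
Qed.

Lemma alg_large L A X r : 1 <= L -> L <= A * X -> 1 / L <= r <= L ->
  r <= 1 / L * (1 + A * X) * (1 + A * X).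
Proof.
move=> hL hAX hr.
have : L * L <= (1 + A * X) * (1 + A * X) by nra.
move=> h.
have -> : 1 / L * (1 + A * X) * (1 + A * X) = ((1 + A * X) * (1 + A * X)) / L by field; lra.
apply: (Rle_trans _ L); first lra.
apply: (Rmult_le_reg_r L); first lra.
rewrite /Rdiv Rmult_assoc Rinv_l; lra.
Qed.

Lemma seg_k d (x y k : vec d) t : 0 <= t <= 1 ->
  edist (seg x y t) k <= (1 - t) * edist x k + t * edist y k.
Proof.
move=> ht; rewrite /edist.
rewrite (vnorm_ext (v := fun i => (fun i => (1 - t) * vsub x k i) i + (fun i => t * vsub y k i) i)).
  apply: Rle_trans (vnorm_tri _ _) _; rewrite !vnorm_scal !Rabs_pos_eq; lra.
by move=> i; rewrite /seg /vsub; ring.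
Qed.

Lemma vsub_split2 d (u v : vec d) (A : mat d) (e : vec d) :
  vnorm (mapply A e) <= vnorm (vsub u v) + vnorm (vsub (vsub u v) (mapply A e)).
Proof.
rewrite (vnorm_ext (u := mapply A e) (v := fun i => vsub u v i + (fun i => - vsub (vsub u v) (mapply A e) i) i)).
  by apply: Rle_trans (vnorm_tri _ _) _; rewrite vnorm_opp; lra.
by move=> i; rewrite /vsub; ring.
Qed.

Lemma sumR_eq0 d (f : 'I_d -> R) : (forall i, 0 <= f i) -> sumR f = 0 -> forall i, f i = 0.
Proof.
move=> H Hs i; move: Hs; rewrite /sumR (bigD1 i) //=.
set s := (X in _ + X = _).
have : 0 <= s.
  rewrite /s; elim/big_rec: _ => [|j y _ hy]; [lra|have := H j; lra].
have := H i; move=> *; lra.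
Qed.

Lemma edist_eq0 d (x y : vec d) : edist x y = 0 -> x = y.
Proof.
rewrite /edist vnorm_dot => h.
have h2 : dot (vsub x y) (vsub x y) = 0.
  apply: sqrt_eq_0 => //; apply: dot_ge0.
apply: functional_extensionality => i.
have := sumR_eq0 (f := fun i => vsub x y i * vsub x y i) (fun i => ltac:(nra)) h2 i.
rewrite /vsub => h3; nra.
Qed.

Theorem mainTheorem14 (d : nat) (M : vec d -> Prop) (alpha : R)
  (Phi : vec d -> vec d) (F : vec d -> Prop) :
  is_open M -> 0 < alpha <= 1 -> conformal_C1a_diffeo M alpha Phi ->
  (exists x, F x) -> seq_compact F -> (forall x, F x -> M x) ->
  exists S, 0 < S /\ almost_similar_on F alpha S Phi.
Proof.
move=> HM ha [DPhi [Psi [DPsi [[Hd [_ [C [hC HC]]]] [Hconf [Himo [HPsi1 [HPsi2 [Hd2 [_ [C2 [hC2 HC2]]]]]]]]]]]].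
move=> [x0 Fx0] HF HFM.
have [L1 [hL1 HL1]] := lip HM (proj1 ha) Hd hC HC HF HFM.
have HcF : contin_on F Phi.
  move=> x Fx eps he; have [dd [hdd Hdd]] := deriv_contin Hd (HFM x Fx) he.
  exists dd; split => // y Fy; apply: Hdd; exact: HFM.
have HIF := image_compact HF HcF.
have HIFM : forall u, Defs.image F Phi u -> Defs.image M Phi u.
  by move=> u [x [Fx <-]]; exists x; split => //; apply: HFM.
have [L2 [hL2 HL2]] := lip Himo (proj1 ha) Hd2 hC2 HC2 HIF HIFM.
set L := L1 + L2 + 1.
have hL : 1 <= L by rewrite /L; lra.
have HB : forall x y, F x -> F y -> edist x y / L <= edist (Phi x) (Phi y) <= L * edist x y.
  move=> x y Fx Fy; split.
  - have := HL2 (Phi x) (Phi y) (ex_intro _ x (conj Fx erefl)) (ex_intro _ y (conj Fy erefl)).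
    rewrite !HPsi1; try exact: HFM.
    move=> h. have he := edist_ge0 (Phi x) (Phi y).
    apply: (Rmult_le_reg_r L); first lra.
    rewrite /Rdiv Rmult_assoc Rinv_l; last lra.
    rewrite Rmult_1_r; apply: Rle_trans h _.
    rewrite Rmult_comm; apply: Rmult_le_compat_l => //; rewrite /L; lra.
  - apply: Rle_trans (HL1 x y Fx Fy) _.
    apply: Rmult_le_compat_r; [apply: edist_ge0|rewrite /L; lra].
have HR : forall x y, F x -> F y -> x <> y ->
    1 / L <= edist (Phi x) (Phi y) / edist x y <= L.
  move=> x y Fx Fy hxy.
  have hpos : 0 < edist x y.
    case: (edist_ge0 x y) => // h0; exfalso; apply: hxy.
    exact: edist_eq0.
  have [h1 h2] := HB x y Fx Fy.
  split.
  - apply: (Rmult_le_reg_r (edist x y)) => //.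
    have -> : edist (Phi x) (Phi y) / edist x y * edist x y = edist (Phi x) (Phi y) by field; lra.
    have -> : 1 / L * edist x y = edist x y / L by field; lra.
    lra.
  - apply: (Rmult_le_reg_r (edist x y)) => //.
    have -> : edist (Phi x) (Phi y) / edist x y * edist x y = edist (Phi x) (Phi y) by field; lra.
    lra.
have [del [hdel Hdel]] := margin HF HM HFM.
set P := rpow (del / 2) alpha.
have hP : 0 < P by apply: rpow_pos; lra.
exists 1; split; first lra; split.
  by exists L; split; [lra|move=> x y Fx Fy; exact: HB].
set A := 4 * L * C + L / P + 1.
have hLP : 0 < L / P by apply: Rdiv_lt_0_compat; lra.
have h4 : 0 <= 4 * L * C by have := Rmult_le_pos (4 * L) C ltac:(lra) hC; lra.
have hA : 0 < A by rewrite /A; lra.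
exists A; split => //.
move=> K [k Kk] HK HKF D HD.
have HKD : forall k1 k2, K k1 -> K k2 -> edist k1 k2 <= D.
  move=> k1 k2 K1 K2; apply: (proj1 HD); by exists k1, k2.
have hD0 : 0 <= D by have := HKD k k Kk Kk; rewrite edist_refl.
have Hn : forall x, in_nbhd F K (1 * D) x -> F x /\ edist x k <= 2 * D.
  move=> x [Fx Hx]; split => //; apply: le_epsilon => eps he.
  have [k' [Kk' h]] := Hx eps he.
  have := edist_tri x k' k; have := HKD k' k Kk' Kk; lra.
set X := rpow D alpha.
have hX : 0 <= X by apply: rpow_ge0.
have hAX : 0 <= A * X by apply: Rmult_le_pos; lra.
case: (Rlt_le_dec (2 * D) del) => hsm.
- have [mu [hmu Hmu]] := vnorm_conf (Hconf k (HFM k (HKF k Kk))).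
  set eta := C * rpow (2 * D) alpha.
  have heta0 : 0 <= eta by apply: Rmult_le_pos => //; apply: rpow_ge0.
  have heta : eta <= 2 * C * X.
    have := rpow_2 ha hD0; rewrite -/X => h.
    rewrite /eta; have -> : 2 * C * X = C * (2 * X) by ring.
    by apply: Rmult_le_compat_l.
  have hL0 : 0 < 1 / L by apply: Rdiv_lt_0_compat; lra.
  exists (Rmax (1 / L) (mu - eta) * (1 + A * X)); split.
    apply: Rmult_lt_0_compat; last lra.
    apply: Rlt_le_trans hL0 (Rmax_l _ _).
  move=> x y Hx Hy hxy.
  have [Fx hxk] := Hn x Hx; have [Fy hyk] := Hn y Hy.
  have hr := HR x y Fx Fy hxy.
  have Hw : vnorm (vsub (vsub (Phi y) (Phi x)) (mapply (DPhi k) (vsub y x))) <= eta * edist y x.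
    apply: mvt_est HM Hd _ => t ht.
    have hz : edist (seg x y t) k <= 2 * D.
      apply: Rle_trans (seg_k x y k ht) _; nra.
    have Uz : M (seg x y t) by apply: (Hdel k) => //; [exact: HKF|lra].
    split => //.
    apply: Rle_trans (HC _ _ Uz (HFM k (HKF k Kk))) _.
    apply: Rmult_le_compat_l => //; apply: rpow_mono => //; lra.
  have H1 := vsub_split (Phi y) (Phi x) (DPhi k) (vsub y x).
  have H2 := vsub_split2 (Phi y) (Phi x) (DPhi k) (vsub y x).
  rewrite Hmu in H1 H2.
  rewrite -!/(edist _ _) (edist_sym y x) (edist_sym (Phi y) (Phi x)) in H1 H2 Hw.
  have hpos : 0 < edist x y.
    case: (edist_ge0 x y) => // h0; exfalso; apply: hxy; exact: edist_eq0.
  set r := edist (Phi x) (Phi y) / edist x y in hr *.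
  have Er : edist (Phi x) (Phi y) = r * edist x y by rewrite /r; field; lra.
  rewrite Er in H1 H2.
  have hm : mu - eta <= r <= mu + eta.
    split; apply: (Rmult_le_reg_r (edist x y)) => //; nra.
  have hA4 : 4 * L * C <= A by rewrite /A; lra.
  have [g1 g2] := alg_small hL hC hX (conj heta0 heta) hA4 (proj1 hr) hm.
  split.
  + have -> : Rmax (1 / L) (mu - eta) * (1 + A * X) / (1 + A * X) = Rmax (1 / L) (mu - eta) by field; lra.
    exact: g1.
  + exact: g2.
- exists (1 / L * (1 + A * X)); split.
    apply: Rmult_lt_0_compat; [apply: Rdiv_lt_0_compat|]; lra.
  move=> x y Hx Hy hxy.
  have [Fx _] := Hn x Hx; have [Fy _] := Hn y Hy.
  have hr := HR x y Fx Fy hxy.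
  have hXP : P <= X by apply: rpow_mono; lra.
  have hLA : L <= A * X.
    have : L / P * X <= A * X by apply: Rmult_le_compat_r => //; rewrite /A; lra.
    have : L / P * P <= L / P * X by apply: Rmult_le_compat_l; lra.
    have -> : L / P * P = L by field; lra.
    lra.
  split.
  + have -> : 1 / L * (1 + A * X) / (1 + A * X) = 1 / L by field; lra.
    exact: (proj1 hr).
  + exact: alg_large hL hLA hr.
Qed.
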